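(* Let $A\colon c_c\to c_c$, $(Ax)_1=x_1$, $(Ax)_n=x_n-x_{n-1}$ ($n>1$), and let $g\equiv 0$ on $c_c$ (so $g^*=\delta_{\{0\}}$ on $\ell^2$). Then the adjoint $A^*\colon\ell^2\to\ell^2$ is injective, the only $y\in\ell^2$ with $g^*(-A^*y)<\infty$ is $y=0$, and hence the Fenchel dual problem $$\sup_{y\in\ell^2}\left(-f^*(y)-g^*(-A^*y)\right)$$ has value $0$, attained at $y=0$. Since the primal problem $\inf_{x\in c_c}\left(f(Ax)+g(x)\right)$ has value $\pi^2/12$, this pair of problems has a positive duality gap $\pi^2/12>0$, although $f,g$ are convex, lower semicontinuous and $0\in\operatorname{core}(A\operatorname{dom} g-\operatorname{dom} f)$.
   Context: Let $c_c$ be the space of finitely supported real sequences with the $\ell^2$-norm; its dual is identified with $\ell^2$ via $\langle y,x\rangle=\sum_n y_nx_n$. Let $f\colon c_c\to\mathbb{R}$, $f(x)=\sum_{n=1}^\infty \frac{n^2}{2}(x_n-n^{-2})^2$. For $h\colon c_c\to(-\infty,\infty]$, $h^*(y)=\sup_{x\in c_c}(\langle y,x\rangle-h(x))$ for $y\in\ell^2$. The adjoint $A^*$ is defined by $\langle A^*y,x\rangle=\langle y,Ax\rangle$. $\delta_{\{0\}}$ is the indicator function of $\{0\}$, $\operatorname{dom}h=\{x:h(x)<\infty\}$, $\operatorname{core}$ denotes the algebraic interior. *)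

(* Defs.v *)
From Stdlib Require Import Reals Lra.
From Coquelicot Require Import Coquelicot.
Open Scope R_scope.

(* Sequences are indexed from 0: the paper's coordinate x_n (n >= 1) is x (n-1). *)
Definition seqR := nat -> R.

Definition is_cc (x : seqR) : Prop := exists N : nat, forall n, (N <= n)%nat -> x n = 0.

Definition is_l2 (y : seqR) : Prop := ex_series (fun n => (y n) ^ 2).

Definition l2norm (x : seqR) : R := sqrt (Series (fun n => (x n) ^ 2)).

Definition vadd (x z : seqR) : seqR := fun n => x n + z n.
Definition vsub (x z : seqR) : seqR := fun n => x n - z n.
Definition vscal (t : R) (x : seqR) : seqR := fun n => t * x n.
Definition vopp (x : seqR) : seqR := fun n => - x n.
Definition vzero : seqR := fun _ => 0.

Definition pairing (y x : seqR) : R := Series (fun n => y n * x n).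

Definition f_cc (x : seqR) : R :=
  Series (fun k => (INR (S k))^2 / 2 * (x k - 1 / (INR (S k))^2)^2).

Definition g_cc (x : seqR) : R := 0.

Definition A (x : seqR) : seqR :=
  fun n => match n with O => x O | S m => x (S m) - x m end.

Definition Astar (y : seqR) : seqR := fun n => y n - y (S n).

Definition conj (h : seqR -> R) (y : seqR) : Rbar :=
  Lub_Rbar (fun r => exists x, is_cc x /\ r = pairing y x - h x).

(* dual objective  -f_cc*(y) - g_cc*(-A^* y)  (never +oo for these f_cc, g_cc) *)
Definition dual_obj (y : seqR) : Rbar :=
  Rbar_minus (Rbar_opp (conj f_cc y)) (conj g_cc (vopp (Astar y))).

Definition dual_value : Rbar :=
  Lub_Rbar (fun r => exists y, is_l2 y /\ dual_obj y = Finite r).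

Definition primal_value : Rbar :=
  Glb_Rbar (fun r => exists x, is_cc x /\ r = f_cc (A x) + g_cc x).

Definition convex_cc (h : seqR -> R) : Prop :=
  forall x z t, is_cc x -> is_cc z -> 0 <= t <= 1 ->
    h (vadd (vscal t x) (vscal (1 - t) z)) <= t * h x + (1 - t) * h z.

Definition lsc_cc (h : seqR -> R) : Prop :=
  forall x, is_cc x -> forall eps, 0 < eps -> exists delta, 0 < delta /\
    forall z, is_cc z -> l2norm (vsub z x) < delta -> h x - eps < h z.

Definition in_core (S : seqR -> Prop) (p : seqR) : Prop :=
  forall d, is_cc d -> exists eps, 0 < eps /\
    forall t, 0 <= t <= eps -> S (vadd p (vscal t d)).

(* dom h = { x in c_c | h x < +oo }; for real-valued h this is all of c_c *)
Definition dom (h : seqR -> R) (x : seqR) : Prop := is_cc x.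

Definition Adomg_minus_domf (v : seqR) : Prop :=
  exists x b, dom g_cc x /\ dom f_cc b /\ v = vsub (A x) b.

(* Main.v *)
Require Import Defs.
From Stdlib Require Import Reals Lra Lia FunctionalExtensionality Classical.
From Coquelicot Require Import Coquelicot.
Open Scope R_scope.

Lemma Sk_match k : (match k with | 0%nat => 1 | S _ => INR k + 1 end) = INR k + 1.
Proof. destruct k; simpl; ring. Qed.

Lemma dH k x : is_derive (fun x => sin x * cos x ^ S k) x
  ((INR k + 2) * cos x ^ S (S k) - (INR k + 1) * cos x ^ k).
Proof. auto_derive; auto. rewrite Sk_match.
assert (E := sin2_cos2 x). unfold Rsqr in E. simpl.
assert (Hs: sin x * sin x = 1 - cos x * cos x) by lra.
set (c:= cos x) in *. set (s := sin x) in *. set (p := c ^ k).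
transitivity (c * (c * p) - (s * s) * ((INR k + 1) * p)). ring.
rewrite Hs. ring. Qed.

Lemma dG k x : is_derive (fun x => x * cos x ^ (S (S k)) + (INR k/2 + 1) * x^2 * sin x * cos x ^ (S k)) x
  (cos x ^ S (S k) + 2 * (INR k/2+1)^2 * x^2 * cos x ^ S (S k) - (INR k/2+1) * (INR k + 1) * x^2 * cos x ^ k).
Proof. auto_derive; auto. rewrite Sk_match.
assert (E := sin2_cos2 x). unfold Rsqr in E. simpl.
assert (Hs: sin x * sin x = 1 - cos x * cos x) by lra.
set (c:= cos x) in *. set (s := sin x) in *. set (p := c ^ k).
transitivity (c * (c * p) + x * (- s * ((INR k + 1 + 1) * (c * p))) +
  (((INR k/2 + 1) * (2 * x) * s + (INR k/2 + 1) * (x * x) * c) * (c * p) -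
   (INR k/2 + 1) * (x * x) * (s * s) * ((INR k + 1) * p))).
ring. rewrite Hs. field. Qed.

Definition Ik k := RInt (fun x => cos x ^ k) 0 (PI/2).
Definition Jk k := RInt (fun x => x^2 * cos x ^ k) 0 (PI/2).

Lemma isI k : is_RInt (fun x => cos x ^ k) 0 (PI/2) (Ik k).
Proof. unfold Ik, Jk. apply (RInt_correct (V:=R_CompleteNormedModule)), ex_RInt_continuous. intros z _. apply (@ex_derive_continuous R_AbsRing R_NormedModule). auto_derive; auto. Qed.
Lemma isJ k : is_RInt (fun x => x^2 * cos x ^ k) 0 (PI/2) (Jk k).
Proof. unfold Ik, Jk. apply (RInt_correct (V:=R_CompleteNormedModule)), ex_RInt_continuous. intros z _. apply (@ex_derive_continuous R_AbsRing R_NormedModule). auto_derive; auto. Qed.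

Lemma is_RInt_eq (f g : R -> R) a b l1 l2 : is_RInt f a b l1 -> is_RInt g a b l2 ->
  (forall x, f x = g x) -> l1 = l2.
Proof. intros H1 H2 E. rewrite <- (is_RInt_unique _ _ _ _ H1), <- (is_RInt_unique _ _ _ _ H2).
apply RInt_ext; auto. Qed.

Lemma W k : (INR k + 2) * Ik (S (S k)) - (INR k + 1) * Ik k = 0.
Proof.
  assert (Hc: forall x, continuous (fun x => (INR k + 2) * cos x ^ S (S k) - (INR k + 1) * cos x ^ k) x).
  { intros; apply (@ex_derive_continuous R_AbsRing R_NormedModule); auto_derive; auto. }
  assert (H := is_RInt_derive (fun x => sin x * cos x ^ S k) _ 0 (PI/2) (fun x _ => dH k x) (fun x _ => Hc x)).
  assert (H2 := is_RInt_minus _ _ _ _ _ _ (is_RInt_scal _ _ _ (INR k + 2) _ (isI (S (S k)))) (is_RInt_scal _ _ _ (INR k+1) _ (isI k))).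
  assert (E := is_RInt_eq _ _ _ _ _ _ H2 H (fun x => eq_refl)).
  revert E. unfold minus, plus, opp, scal; simpl; unfold mult; simpl. rewrite sin_PI2, cos_PI2, sin_0. intro E. nra.
Qed.

Lemma K k : Ik (S (S k)) + 2 * (INR k/2+1)^2 * Jk (S (S k)) - (INR k/2+1) * (INR k + 1) * Jk k = 0.
Proof.
  assert (Hc: forall x, continuous (fun x => cos x ^ S (S k) + 2 * (INR k/2+1)^2 * x^2 * cos x ^ S (S k) - (INR k/2+1) * (INR k + 1) * x^2 * cos x ^ k) x).
  { intros; apply (@ex_derive_continuous R_AbsRing R_NormedModule); auto_derive; auto. }
  assert (H := is_RInt_derive _ _ 0 (PI/2) (fun x _ => dG k x) (fun x _ => Hc x)).
  assert (H2 := is_RInt_minus _ _ _ _ _ _ (is_RInt_plus _ _ _ _ _ _ (isI (S (S k))) (is_RInt_scal _ _ _ (2 * (INR k/2+1)^2) _ (isJ (S (S k))))) (is_RInt_scal _ _ _ ((INR k/2+1) * (INR k + 1)) _ (isJ k))).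
  assert (E := is_RInt_eq _ _ _ _ _ _ H2 H (fun x => ltac:(unfold minus, plus, opp, scal; simpl; unfold mult; simpl; ring))).
  revert E. unfold minus, plus, opp, scal; simpl; unfold mult; simpl. rewrite sin_PI2, cos_PI2, sin_0. intro E. nra.
Qed.

Lemma I0 : Ik 0 = PI/2.
Proof. assert (H := is_RInt_const 0 (PI/2) 1).
 assert (E := is_RInt_eq _ _ _ _ _ _ (isI 0) H (fun x => eq_refl)).
 rewrite E. unfold scal; simpl; unfold mult; simpl. ring. Qed.

Lemma J0 : Jk 0 = (PI/2)^3/3.
Proof.
 assert (Hd: forall x, is_derive (fun x => x^3/3) x (x^2)).
 { intros; auto_derive; auto; field. }
 assert (Hc: forall x, continuous (fun x => x^2) x).
 { intros; apply (@ex_derive_continuous R_AbsRing R_NormedModule); auto_derive; auto. }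
 assert (H := is_RInt_derive _ _ 0 (PI/2) (fun x _ => Hd x) (fun x _ => Hc x)).
 assert (E := is_RInt_eq _ _ _ _ _ _ (isJ 0) H (fun x => ltac:(simpl; ring))).
 rewrite E. unfold minus, plus, opp; simpl. field. Qed.

Lemma INR2m m : INR (2*m) = 2 * INR m.
Proof. rewrite mult_INR; simpl; ring. Qed.

Lemma Ipos m : 0 < Ik (2*m).
Proof. induction m.
 - simpl. rewrite I0. assert (H:=PI_RGT_0); lra.
 - replace (2 * S m)%nat with (S (S (2*m))) by lia.
   assert (H := W (2*m)). rewrite INR2m in H. assert (H0 := pos_INR m). nra. Qed.

Lemma sin_ge x : 0 <= x <= PI/2 -> x <= 4 * sin x.
Proof. intros Hx. assert (HP:= PI_4). assert (HP2:=PI_RGT_0).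
 destruct (SIN x) as [H _]; try lra.
 assert (E: sin_lb x = x - x^3/6 + x^5/120 - x^7/5040).
 { unfold sin_lb, sin_approx, sin_term. simpl. field. }
 rewrite E in H.
 assert (0 <= x^2 <= 4) by nra.
 assert (0 <= x^4 * (1/120 - x^2/5040)) by (apply Rmult_le_pos; nra).
 nra. Qed.

Lemma Jbounds k : 0 <= Jk k <= 16 * (Ik k - Ik (S (S k))).
Proof. assert (Hab: 0 <= PI/2) by (assert (H1:=PI_RGT_0); lra). split.
 - assert (H := is_RInt_const 0 (PI/2) 0).
   assert (Hle := is_RInt_le _ _ _ _ _ _ Hab H (isJ k)).
   revert Hle. unfold scal; simpl; unfold mult; simpl. intro Hle. rewrite Rmult_0_r in Hle. apply Hle.
   intros x Hx. apply Rmult_le_pos. apply pow2_ge_0. apply pow_le. apply Rlt_le, cos_gt_0; lra.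
 - assert (H := is_RInt_scal _ _ _ 16 _ (is_RInt_minus _ _ _ _ _ _ (isI k) (isI (S (S k))))).
   apply (is_RInt_le _ _ _ _ _ _ Hab (isJ k) H).
   intros x Hx. unfold scal, minus, plus, opp; simpl; unfold mult; simpl.
   assert (Hc := cos_gt_0 x ltac:(lra) ltac:(lra)).
   assert (Hp : 0 <= cos x ^ k) by (apply pow_le; lra).
   assert (Hs := sin_ge x ltac:(lra)).
   assert (E := sin2_cos2 x). unfold Rsqr in E.
   assert (x * x <= 16 * (sin x * sin x)) by nra.
   assert (x*x*cos x ^ k <= 16 * (sin x * sin x) * cos x ^ k) by nra.
   replace (cos x * (cos x * cos x ^ k)) with ((1 - sin x * sin x) * cos x ^ k) by (rewrite <- E; ring).
   nra.
Qed.

Definition rr m := Jk (2*m) / Ik (2*m).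

Lemma rr_rec m : rr m - rr (S m) = 1 / (2 * (INR m + 1)^2).
Proof. unfold rr. replace (2 * S m)%nat with (S (S (2*m))) by lia.
 assert (HW := W (2*m)). assert (HK := K (2*m)). rewrite INR2m in HW, HK.
 assert (HI := Ipos m). assert (H0 := pos_INR m).
 set (a := INR m) in *. set (I := Ik (2*m)) in *. set (I2 := Ik (S (S (2*m)))) in *.
 set (J := Jk (2*m)) in *. set (J2 := Jk (S (S (2*m)))) in *.
 assert (HI2 : I2 = (2*a+1)/(2*a+2) * I).
 { apply (Rmult_eq_reg_l (2*a+2)). field_simplify; try lra. lra. }
 assert (HJ2 : J2 = ((a+1)*(2*a+1)*J - I2) / (2*(a+1)^2)).
 { apply (Rmult_eq_reg_l (2*(a+1)^2)). field_simplify; try lra. 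
   replace (2 * a / 2 + 1) with (a+1) in HK by field. nra. }
 rewrite HJ2, HI2. field. repeat split; nra. Qed.

Lemma rr_bounds m : 0 <= rr m <= 8 / (INR m + 1).
Proof. unfold rr. assert (HI := Ipos m). assert (H0 := pos_INR m).
 assert (HB := Jbounds (2*m)). assert (HW := W (2*m)). rewrite INR2m in HW.
 set (a := INR m) in *. set (I := Ik (2*m)) in *. set (I2 := Ik (S (S (2*m)))) in *.
 set (J := Jk (2*m)) in *.
 assert (HI2 : I2 = (2*a+1)/(2*a+2) * I).
 { apply (Rmult_eq_reg_l (2*a+2)). field_simplify; try lra. lra. }
 rewrite HI2 in HB. split. apply Rdiv_le_0_compat; lra.
 apply (Rmult_le_reg_r I); auto. field_simplify; try lra.
 replace (8 * I / (a+1)) with (16 * (I - (2*a+1)/(2*a+2) * I)) by (field; lra). lra. Qed.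

Definition bb k := 1 / (2 * (INR (S k))^2).

Lemma sum_bb N : sum_n bb N = rr 0 - rr (S N).
Proof. induction N.
 - rewrite sum_O. assert (H := rr_rec 0). rewrite <- S_INR in H. unfold bb. lra.
 - rewrite sum_Sn, IHN. assert (H := rr_rec (S N)). rewrite <- S_INR in H. unfold bb, plus. simpl plus. change (rr 0 - rr (S N) + 1 / (2 * INR (S (S N)) ^ 2) = rr 0 - rr (S (S N))). lra. Qed.

Lemma rr0 : rr 0 = PI^2/12.
Proof. unfold rr. simpl. rewrite I0, J0. assert (H:=PI_RGT_0). field. lra. Qed.

Lemma basel : is_series bb (PI^2/12).
Proof.
 assert (Hl : is_lim_seq (fun N => rr (S N)) 0).
 { apply is_lim_seq_le_le with (u := fun _ => 0) (w := fun N => 8 * / INR (S N)).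
   - intros N. assert (H := rr_bounds (S N)). rewrite S_INR in *. assert (H0 := pos_INR N).
     split. lra. unfold Rdiv in H. replace (INR N + 1 + 1) with (INR N + 1 + 1) in H by ring. 
     assert (/ (INR N + 1 + 1) <= / (INR N + 1)) by (apply Rinv_le_contravar; lra). nra.
   - apply is_lim_seq_const.
   - replace (Finite 0) with (Rbar_mult 8 (Rbar_inv p_infty)) by (simpl; f_equal; ring).
     apply is_lim_seq_scal_l. apply is_lim_seq_inv. 
     apply (is_lim_seq_incr_1 INR). apply is_lim_seq_INR. discriminate. }
 assert (H := is_lim_seq_minus' _ _ _ _ (is_lim_seq_const (rr 0)) Hl).
 rewrite rr0, Rminus_0_r in H.
 apply (is_lim_seq_ext _ (sum_n bb)) in H. exact H.
 intros; rewrite sum_bb, rr0; reflexivity. Qed.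

Ltac Rring := match goal with |- ?a = ?b => change (@eq R a b); ring end.

Lemma sum_stable (u : nat -> R) N : (forall n, (N < n)%nat -> u n = 0) ->
  forall k, sum_n u (N + k) = sum_n u N.
Proof. intros Hu k. induction k. rewrite Nat.add_0_r; reflexivity.
 rewrite Nat.add_succ_r, sum_Sn, IHk, Hu by lia. unfold plus; simpl. ring. Qed.

Lemma series_fin (u : nat -> R) N : (forall n, (N < n)%nat -> u n = 0) ->
  is_series u (sum_n u N).
Proof. intros Hu. change (is_lim_seq (sum_n u) (sum_n u N)).
 apply (is_lim_seq_ext_loc (fun _ => sum_n u N)). exists N. intros n Hn.
 replace n with (N + (n - N))%nat by lia. rewrite sum_stable; auto.
 apply is_lim_seq_const. Qed.

Lemma sum_n_zero (u : nat -> R) M : (forall n, (n <= M)%nat -> u n = 0) -> sum_n u M = 0.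
Proof. induction M; intros H. rewrite sum_O; apply H; lia.
 rewrite sum_Sn, IHM. rewrite H by lia. unfold plus; simpl; ring. intros; apply H; lia. Qed.

Lemma sum_single (u : nat -> R) k : (forall n, n <> k -> u n = 0) -> sum_n u k = u k.
Proof. intros H. destruct k. apply sum_O. rewrite sum_Sn, sum_n_zero. unfold plus; simpl; ring.
 intros; apply H; lia. Qed.

Lemma sum_n_le_gen (a b c : nat -> R) d M : (forall k, (k <= M)%nat -> a k - d * c k <= b k) ->
  sum_n a M - d * sum_n c M <= sum_n b M.
Proof. induction M; intros H. rewrite !sum_O; apply H; lia.
 rewrite !sum_Sn. unfold plus; simpl. assert (H1 := H (S M) (le_n _)).
 assert (H2 : sum_n a M - d * sum_n c M <= sum_n b M) by (apply IHM; intros; apply H; lia). lra. Qed.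

Lemma sum_n_le' (a b : nat -> R) M : (forall k, (k <= M)%nat -> a k <= b k) -> sum_n a M <= sum_n b M.
Proof. intros H. assert (H' := sum_n_le_gen a b (fun _ => 0) 0 M). rewrite Rmult_0_l, Rminus_0_r in H'.
 apply H'. intros; rewrite Rmult_0_r, Rminus_0_r; auto. Qed.

Lemma sum_nonneg (a : nat -> R) M : (forall n, 0 <= a n) -> 0 <= sum_n a M.
Proof. intros H. induction M. rewrite sum_O; auto. rewrite sum_Sn; unfold plus; simpl.
 assert (H5 := H (S M)). lra. Qed.

Lemma sum_ge_term (a : nat -> R) M k : (forall n, 0 <= a n) -> (k <= M)%nat -> a k <= sum_n a M.
Proof. intros H. induction M; intros Hk.
 replace k with 0%nat by lia. rewrite sum_O; lra.
 rewrite sum_Sn; unfold plus; simpl. destruct (Nat.eq_dec k (S M)).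
 subst. assert (0 <= sum_n a M) by (apply sum_nonneg; auto). lra.
 assert (a k <= sum_n a M) by (apply IHM; lia). assert (H5 := H (S M)). lra. Qed.

Lemma sum_mono (a : nat -> R) M k : (forall n, 0 <= a n) -> sum_n a M <= sum_n a (M + k).
Proof. intros H. induction k. rewrite Nat.add_0_r; lra. rewrite Nat.add_succ_r, sum_Sn. unfold plus; simpl.
 assert (H0 := H (S (M + k))). lra. Qed.

Lemma partial_le (a : nat -> R) l M : is_series a l -> (forall n, 0 <= a n) -> sum_n a M <= l.
Proof. intros Hs H. assert (Hl : is_lim_seq (sum_n a) l) by exact Hs.
 assert (R0 := is_lim_seq_le_loc (fun _ => sum_n a M) (sum_n a) _ _ ltac:(exists M; intros n Hn; replace n with (M + (n - M))%nat by lia; apply sum_mono; auto) (is_lim_seq_const _) Hl).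
 exact R0. Qed.

Lemma lub0 (E : R -> Prop) : (forall r, E r -> r <= 0) ->
  (forall eps, 0 < eps -> exists r, E r /\ - eps < r) -> Lub_Rbar E = Finite 0.
Proof. intros H1 H2. apply is_lub_Rbar_unique. split.
 - intros r Er. simpl. auto.
 - intros b Hb. destruct b as [r| |]; simpl; auto.
   + destruct (Rle_or_lt 0 r); auto. destruct (H2 (- r)) as [r0 [E0 L0]]. lra.
     assert (Hb0 := Hb r0 E0). simpl in Hb0. lra.
   + destruct (H2 1) as [r0 [E0 L0]]. lra. exact (Hb r0 E0).
Qed.

Lemma lub_pinf (E : R -> Prop) : (forall M, exists r, E r /\ M < r) -> Lub_Rbar E = p_infty.
Proof. intros H. apply is_lub_Rbar_unique. split.
 - intros r Er. simpl. auto.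
 - intros b Hb. destruct b as [r| |]; simpl; auto.
   + destruct (H r) as [r0 [E0 L0]]. assert (Hb0 := Hb r0 E0). simpl in Hb0. lra.
   + destruct (H 0) as [r0 [E0 L0]]. exact (Hb r0 E0).
Qed.

Lemma glbL (E : R -> Prop) L : (forall r, E r -> L <= r) -> E L -> Glb_Rbar E = Finite L.
Proof. intros H1 H2. apply is_glb_Rbar_unique. split.
 - intros r Er. simpl. auto.
 - intros b Hb. exact (Hb L H2).
Qed.

Lemma cc_vzero : is_cc vzero.
Proof. exists 0%nat. reflexivity. Qed.

Lemma l2_vzero : is_l2 vzero.
Proof. unfold is_l2. exists (sum_n (fun n => vzero n ^ 2) 0). apply series_fin. intros; unfold vzero; ring. Qed.

Lemma l2_shift y : is_l2 y -> is_l2 (fun n => y (S n)).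
Proof. unfold is_l2. intros H. apply (ex_series_incr_1 (fun n => y n ^ 2)). exact H. Qed.

Lemma l2_sub a b : is_l2 a -> is_l2 b -> is_l2 (fun n => a n - b n).
Proof. unfold is_l2. intros Ha Hb.
 apply (@ex_series_le R_AbsRing R_CompleteNormedModule _ (fun n => plus (scal 2 (a n ^ 2)) (scal 2 (b n ^ 2)))).
 - intros n. unfold norm; simpl. unfold abs; simpl. unfold plus, scal; simpl; unfold mult; simpl.
   rewrite Rabs_pos_eq by (apply pow2_ge_0). assert (H5 := pow2_ge_0 (a n + b n)). simpl in *. nra.
 - apply (@ex_series_plus R_AbsRing R_NormedModule); apply (@ex_series_scal_l R_AbsRing R_NormedModule); auto.
Qed.

Lemma Astar_l2 y : is_l2 y -> is_l2 (Astar y).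
Proof. intros H. apply (l2_sub y (fun n => y (S n))); auto. apply l2_shift; auto. Qed.

Lemma adj_partial (y x : seqR) M :
  sum_n (fun n => Astar y n * x n) M = sum_n (fun n => y n * A x n) M - y (S M) * x M.
Proof. induction M. rewrite !sum_O. unfold Astar, A. change (@eq R ((y 0%nat - y 1%nat) * x 0%nat) (y 0%nat * x 0%nat - y 1%nat * x 0%nat)). ring.
 rewrite !sum_Sn, IHM. unfold plus; simpl. unfold Astar. ring. Qed.

Lemma adjoint y x : is_cc x -> pairing (Astar y) x = pairing y (A x).
Proof. intros [N HN]. unfold pairing.
 rewrite (is_series_unique _ _ (series_fin (fun n => Astar y n * x n) N ltac:(intros n Hn; cbv beta; rewrite HN by lia; ring))).
 rewrite (is_series_unique _ _ (series_fin (fun n => y n * A x n) N ltac:(intros n Hn; destruct n; [lia|]; cbv beta; unfold A; rewrite !HN by lia; ring))).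
 rewrite adj_partial, HN by lia. ring. Qed.

Lemma Astar_inj y1 y2 : is_l2 y1 -> is_l2 y2 -> Astar y1 = Astar y2 -> y1 = y2.
Proof. intros H1 H2 E. assert (Hd := l2_sub y1 y2 H1 H2). set (d := fun n => y1 n - y2 n) in *.
 assert (Hc : forall n, d n = d 0%nat).
 { induction n; auto. rewrite <- IHn. unfold d. assert (En := equal_f E n). unfold Astar in En. lra. }
 assert (L := ex_series_lim_0 _ Hd).
 apply (is_lim_seq_ext _ (fun _ => d 0%nat ^ 2)) in L; [| intros; rewrite Hc; auto].
 assert (L2 := is_lim_seq_const (d 0%nat ^ 2)).
 apply is_lim_seq_unique in L. apply is_lim_seq_unique in L2. rewrite L in L2. injection L2 as L2.
 assert (D0 : d 0%nat = 0) by nra.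
 apply functional_extensionality. intros n. assert (Hn := Hc n). rewrite D0 in Hn. unfold d in Hn. lra. Qed.

Lemma pairing_vzero x : pairing vzero x = 0.
Proof. unfold pairing.
 assert (H := series_fin (fun n => vzero n * x n) 0 ltac:(intros; cbv beta; unfold vzero; ring)).
 rewrite (is_series_unique _ _ H). rewrite sum_O. unfold vzero; ring. Qed.

Lemma conj_g_zero : conj g_cc vzero = Finite 0.
Proof. unfold conj. apply lub0.
 - intros r [x [_ ->]]. rewrite pairing_vzero. unfold g_cc. lra.
 - intros eps He. exists 0. split. exists vzero. split. apply cc_vzero. rewrite pairing_vzero. unfold g_cc; ring. lra. Qed.

Definition ek (k : nat) (c : R) : seqR := fun n => if Nat.eqb n k then c else 0.

Lemma ek_cc k c : is_cc (ek k c).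
Proof. exists (S k). intros n Hn. unfold ek. destruct (Nat.eqb_spec n k); [lia | auto]. Qed.

Lemma pairing_ek y k c : pairing y (ek k c) = y k * c.
Proof. unfold pairing.
 rewrite (is_series_unique _ _ (series_fin (fun n => y n * ek k c n) k ltac:(intros n Hn; unfold ek; destruct (Nat.eqb_spec n k); [lia|ring]))).
 rewrite sum_single. unfold ek. rewrite Nat.eqb_refl. auto.
 intros n Hn. unfold ek. destruct (Nat.eqb_spec n k); [lia|ring]. Qed.

Lemma conj_g_nonzero y : y <> vzero -> conj g_cc y = p_infty.
Proof. intros Hy.
 assert (Hk : exists k, y k <> 0).
 { apply not_all_ex_not. intros Hall. apply Hy. apply functional_extensionality. intros; apply Hall. }
 destruct Hk as [k Hk]. unfold conj. apply lub_pinf. intros M.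
 exists (Rabs M + 1). split. exists (ek k ((Rabs M + 1) / y k)). split. apply ek_cc.
 rewrite pairing_ek. unfold g_cc. field. auto.
 assert (H := Rle_abs M). lra. Qed.

Lemma Astar_vzero : Astar vzero = vzero.
Proof. apply functional_extensionality; intros; unfold Astar, vzero; ring. Qed.

Lemma vopp_Astar_nz y : is_l2 y -> y <> vzero -> vopp (Astar y) <> vzero.
Proof. intros Hl Hy E. apply Hy. apply Astar_inj; auto. apply l2_vzero. rewrite Astar_vzero.
 apply functional_extensionality; intros n. assert (En := equal_f E n). unfold vopp, vzero in *. lra. Qed.

Lemma part4 y : is_l2 y -> Rbar_lt (conj g_cc (vopp (Astar y))) p_infty -> y = vzero.
Proof. intros Hl Hlt. destruct (classic (y = vzero)) as [|Hy]; auto.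
 rewrite conj_g_nonzero in Hlt by (apply vopp_Astar_nz; auto). simpl in Hlt. contradiction. Qed.

Definition ft (x : seqR) (k : nat) : R := INR (S k) ^ 2 / 2 * (x k - 1 / INR (S k) ^ 2) ^ 2.

Lemma f_cc_ft x : f_cc x = Series (ft x).
Proof. reflexivity. Qed.

Lemma INRS_pos k : 0 < INR (S k).
Proof. apply lt_0_INR; lia. Qed.

Lemma ft_bb x k : ft x k - bb k = INR (S k) ^ 2 / 2 * x k ^ 2 - x k.
Proof. unfold ft, bb. assert (H := INRS_pos k). field. lra. Qed.

Lemma ft_zero x k : x k = 0 -> ft x k = bb k.
Proof. intros H. assert (E := ft_bb x k). rewrite H in E. lra. Qed.

Lemma ft_nonneg x k : 0 <= ft x k.
Proof. unfold ft. apply Rmult_le_pos. assert (H := pow2_ge_0 (INR (S k))). lra. apply pow2_ge_0. Qed.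

Lemma ft_series x N : (forall n, (N <= n)%nat -> x n = 0) ->
  is_series (ft x) (PI^2/12 + sum_n (fun k => ft x k - bb k) N).
Proof. intros HN.
 assert (H := is_series_plus _ _ _ _ basel (series_fin (fun k => ft x k - bb k) N
    ltac:(intros n Hn; cbv beta; rewrite ft_zero by (apply HN; lia); ring))).
 apply (is_series_ext _ (ft x)) in H. exact H.
 intros n. unfold plus; simpl. Rring. Qed.

Lemma f_cc_val x N : (forall n, (N <= n)%nat -> x n = 0) ->
  f_cc x = PI^2/12 + sum_n (fun k => ft x k - bb k) N.
Proof. intros HN. rewrite f_cc_ft. apply is_series_unique. apply ft_series; auto. Qed.

Lemma f_cc_nonneg x : is_cc x -> 0 <= f_cc x.
Proof. intros [N HN]. rewrite f_cc_ft. assert (H := ft_series x N HN).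
 rewrite (is_series_unique _ _ H). apply Rle_trans with (sum_n (ft x) 0).
 apply sum_nonneg, ft_nonneg. apply partial_le; auto. apply ft_nonneg. Qed.

Definition xM (M : nat) : seqR := fun k => if Nat.leb k M then 1 / INR (S k) ^ 2 else 0.

Lemma f_xM M : f_cc (xM M) = PI^2/12 - sum_n bb M.
Proof. rewrite f_cc_ft. apply is_series_unique.
 assert (H := is_series_minus _ _ _ _ basel (series_fin (fun k => if Nat.leb k M then bb k else 0) M
   ltac:(intros n Hn; cbv beta; destruct (Nat.leb_spec n M); [lia | reflexivity]))).
 rewrite (sum_n_ext_loc _ bb) in H.
 2:{ intros n Hn. destruct (Nat.leb_spec n M); [reflexivity | lia]. }
 apply (is_series_ext _ (ft (xM M))) in H. exact H.
 intros n. unfold plus, opp; simpl. unfold ft, xM, bb. assert (Hp := INRS_pos n).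
 destruct (Nat.leb n M); cbv beta iota; match goal with |- ?a = ?b => change (@eq R a b) end; field; lra. Qed.

Lemma xM_cc M : is_cc (xM M).
Proof. exists (S M). intros n Hn. unfold xM. destruct (Nat.leb_spec n M); [lia | reflexivity]. Qed.

Lemma conj_f_zero : conj f_cc vzero = Finite 0.
Proof. unfold conj. apply lub0.
 - intros r [x [Hx ->]]. rewrite pairing_vzero. assert (H := f_cc_nonneg x Hx). lra.
 - intros eps He. assert (Hb : is_lim_seq (sum_n bb) (PI^2/12)) by exact basel. apply (proj2 (is_lim_seq_spec _ _)) in Hb.
   destruct (Hb (mkposreal eps He)) as [M HM]. specialize (HM M (le_n _)). simpl in HM.
   exists (0 - f_cc (xM M)). split. exists (xM M). split. apply xM_cc. rewrite pairing_vzero; reflexivity.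
   rewrite f_xM. apply Rabs_def2 in HM. lra. Qed.

Lemma dual_obj_zero : dual_obj vzero = Finite 0.
Proof. unfold dual_obj. rewrite Astar_vzero.
 replace (vopp vzero) with vzero by (apply functional_extensionality; intros; unfold vopp, vzero; ring).
 rewrite conj_f_zero, conj_g_zero. simpl. f_equal. ring. Qed.

Lemma dual_obj_val y r : is_l2 y -> dual_obj y = Finite r -> r = 0.
Proof. intros Hl E. destruct (classic (y = vzero)) as [->|Hy].
 - rewrite dual_obj_zero in E. injection E; auto.
 - unfold dual_obj in E. rewrite conj_g_nonzero in E by (apply vopp_Astar_nz; auto).
   destruct (conj f_cc y); simpl in E; try discriminate. injection E; auto. Qed.

Lemma dual_value_zero : dual_value = Finite 0.
Proof. unfold dual_value. apply lub0.
 - intros r [y [Hy E]]. rewrite (dual_obj_val y r Hy E). lra.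
 - intros eps He. exists 0. split. exists vzero. split. apply l2_vzero. apply dual_obj_zero. lra. Qed.

Lemma sum_A x M : sum_n (A x) M = x M.
Proof. induction M. rewrite sum_O; reflexivity. rewrite sum_Sn, IHM. unfold plus; simpl. ring. Qed.

Lemma A_vzero : A vzero = vzero.
Proof. apply functional_extensionality; intros [|n]; unfold A, vzero; simpl; ring. Qed.

Lemma f_vzero : f_cc vzero = PI^2/12.
Proof. rewrite (f_cc_val vzero 0) by reflexivity. rewrite sum_O. rewrite ft_zero by reflexivity. ring. Qed.

Lemma f_lower x : is_cc x -> PI^2/12 <= f_cc (A x).
Proof. intros [N HN].
 rewrite (f_cc_val (A x) (S N)).
 2:{ intros n Hn. destruct n. lia. unfold A. rewrite !HN by lia. ring. }
 assert (H := sum_n_le_gen (fun _ => 0) (fun k => ft (A x) k - bb k) (A x) 1 (S N)).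
 rewrite sum_n_zero in H by auto. rewrite sum_A, HN in H by lia.
 assert (0 <= sum_n (fun k => ft (A x) k - bb k) (S N)).
 { replace 0 with (0 - 1 * 0) by ring. apply H. intros k _. rewrite ft_bb.
   assert (0 <= INR (S k) ^ 2 / 2 * A x k ^ 2). { apply Rmult_le_pos. assert (H5:= pow2_ge_0 (INR (S k))). lra. apply pow2_ge_0. }
   lra. }
 lra. Qed.

Lemma primal_val : primal_value = Finite (PI^2/12).
Proof. unfold primal_value. apply glbL.
 - intros r [x [Hx ->]]. unfold g_cc. assert (H := f_lower x Hx). lra.
 - exists vzero. split. apply cc_vzero. rewrite A_vzero, f_vzero. unfold g_cc; ring. Qed.

Lemma f_convex : convex_cc f_cc.
Proof. intros x z t [N1 H1] [N2 H2] Ht.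
 set (N := Nat.max N1 N2).
 set (u := vadd (vscal t x) (vscal (1 - t) z)).
 assert (Hx := ft_series x N ltac:(intros n Hn; apply H1; lia)).
 assert (Hz := ft_series z N ltac:(intros n Hn; apply H2; lia)).
 assert (Hu := ft_series u N ltac:(intros n Hn; unfold u, vadd, vscal; rewrite H1, H2 by lia; ring)).
 rewrite !f_cc_ft.
 rewrite (is_series_unique _ _ Hx), (is_series_unique _ _ Hz).
 assert (Hc := is_series_plus _ _ _ _ (is_series_scal t _ _ Hx) (is_series_scal (1-t) _ _ Hz)).
 apply Rle_trans with (Series (fun n => t * ft x n + (1-t) * ft z n)).
 2:{ right. exact (is_series_unique _ _ Hc). }
 apply Series_le.
 - intros n. split. apply ft_nonneg. unfold plus, scal; simpl; unfold mult; simpl.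
   unfold ft, u, vadd, vscal.
   set (w := INR (S n) ^ 2). set (a := 1 / w).
   assert (Hw : 0 <= w) by apply pow2_ge_0.
   assert (E : t * (w / 2 * (x n - a) ^ 2) + (1 - t) * (w / 2 * (z n - a) ^ 2) - w / 2 * (t * x n + (1 - t) * z n - a) ^ 2
      = w / 2 * (t * (1 - t)) * (x n - z n) ^ 2) by ring.
   assert (0 <= w / 2 * (t * (1 - t)) * (x n - z n) ^ 2).
   { apply Rmult_le_pos. apply Rmult_le_pos. lra. nra. apply pow2_ge_0. }
   lra.
 - eexists. exact Hc.
Qed.

Lemma g_convex : convex_cc g_cc.
Proof. intros x z t _ _ _. unfold g_cc. lra. Qed.

Lemma g_lsc : lsc_cc g_cc.
Proof. intros x _ eps He. exists 1. split. lra. intros. unfold g_cc. lra. Qed.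

Lemma coord_le d k : is_cc d -> Rabs (d k) <= l2norm d.
Proof. intros [N HN]. unfold l2norm.
 assert (H := series_fin (fun n => d n ^ 2) (Nat.max N k) ltac:(intros n Hn; cbv beta; rewrite HN by lia; ring)).
 rewrite (is_series_unique _ _ H).
 rewrite <- sqrt_Rsqr_abs. apply sqrt_le_1_alt.
 assert (H2 := sum_ge_term (fun n => d n ^ 2) (Nat.max N k) k ltac:(intros; apply pow2_ge_0) ltac:(lia)).
 unfold Rsqr. simpl in H2 |- *. lra. Qed.

Lemma f_lsc : lsc_cc f_cc.
Proof. intros x Hx eps He. destruct Hx as [N HN].
 assert (Hs := ft_series x N HN).
 set (L := PI ^ 2 / 12 + sum_n (fun k : nat => ft x k - bb k) N) in Hs.
 assert (HfL : f_cc x = L) by (rewrite f_cc_ft; apply is_series_unique; exact Hs).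
 assert (Hl : is_lim_seq (sum_n (ft x)) L) by exact Hs.
 apply (proj2 (is_lim_seq_spec _ _)) in Hl.
 assert (He2 : 0 < eps / 2) by lra.
 destruct (Hl (mkposreal _ He2)) as [M HM]. specialize (HM M (le_n _)). simpl in HM.
 apply Rabs_def2 in HM.
 set (c := fun k => INR (S k) ^ 2 / 2 * (1 + 2 * Rabs (x k - 1 / INR (S k) ^ 2))).
 assert (Hc : forall k, 0 <= c k).
 { intros k. unfold c. apply Rmult_le_pos. assert (H5 := pow2_ge_0 (INR (S k))). lra.
   assert (H5 := Rabs_pos (x k - 1 / INR (S k) ^ 2)). lra. }
 set (K := sum_n c M).
 assert (HK : 0 <= K) by (apply sum_nonneg; auto).
 set (q := eps / (2 * (K + 1))).
 assert (Hq : 0 < q) by (unfold q; apply Rdiv_lt_0_compat; lra).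
 assert (Hq2 : q * (2 * (K + 1)) = eps) by (unfold q; field; lra).
 set (delta := Rmin 1 q).
 assert (Hdel : 0 < delta) by (apply Rmin_pos; lra).
 assert (Hdq : delta <= q) by apply Rmin_r.
 exists delta. split; auto.
 intros z Hz Hd.
 assert (Hcoord : forall k, Rabs (z k - x k) < delta).
 { intros k. assert (H := coord_le (vsub z x) k). unfold vsub in H.
   apply Rle_lt_trans with (l2norm (vsub z x)); auto. apply H.
   destruct Hz as [N2 HN2]. exists (Nat.max N N2). intros n Hn. unfold vsub. rewrite HN, HN2 by lia. ring. }
 assert (Hsum := sum_n_le_gen (ft x) (ft z) c delta M).
 assert (Hsum' : sum_n (ft x) M - delta * K <= sum_n (ft z) M).
 { apply Hsum. intros k _. unfold ft, c.
   set (w := INR (S k) ^ 2). assert (Hw : 0 <= w) by apply pow2_ge_0.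
   set (e := x k - 1 / w). set (d := z k - x k).
   assert (E : z k - 1 / w = e + d) by (unfold e, d; ring). rewrite E.
   assert (Hdk := Hcoord k). fold d in Hdk.
   assert (Hed : - (e * d) <= Rabs e * delta).
   { assert (H5 := Rle_abs (- (e * d))). rewrite Rabs_Ropp, Rabs_mult in H5.
     assert (H6 := Rabs_pos e). assert (Rabs e * Rabs d <= Rabs e * delta) by (apply Rmult_le_compat_l; lra). lra. }
   assert (0 <= w / 2 * ((2 * e * d + d ^ 2) + delta * (1 + 2 * Rabs e))).
   { apply Rmult_le_pos. lra. assert (0 <= d ^ 2) by apply pow2_ge_0. lra. }
   assert (E2 : w / 2 * (e + d) ^ 2 - (w / 2 * e ^ 2 - delta * (w / 2 * (1 + 2 * Rabs e)))
     = w / 2 * ((2 * e * d + d ^ 2) + delta * (1 + 2 * Rabs e))) by ring.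
   lra. }
 assert (HdK : delta * K <= eps / 2).
 { assert (delta * K <= q * K) by (apply Rmult_le_compat_r; lra). nra. }
 assert (Hfz : sum_n (ft z) M <= f_cc z).
 { destruct Hz as [N2 HN2]. rewrite f_cc_ft. rewrite (is_series_unique _ _ (ft_series z N2 HN2)).
   apply partial_le. apply ft_series; auto. apply ft_nonneg. }
 rewrite HfL. lra. Qed.

Lemma core0 : in_core Adomg_minus_domf vzero.
Proof. intros d Hd. exists 1. split. lra. intros t Ht.
 exists vzero, (vopp (vscal t d)). split. apply cc_vzero. split.
 destruct Hd as [N HN]. exists N. intros n Hn. unfold vopp, vscal. rewrite HN by lia. ring.
 apply functional_extensionality; intros [|n]; unfold vadd, vsub, vopp, vscal, A, vzero; simpl; ring. Qed.

Theorem mainTheorem12 :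
  (* Astar is the adjoint of A, mapping l^2 into l^2 *)
  (forall y, is_l2 y -> is_l2 (Astar y) /\
     forall x, is_cc x -> pairing (Astar y) x = pairing y (A x)) /\
  (* A^* is injective on l^2 *)
  (forall y1 y2, is_l2 y1 -> is_l2 y2 -> Astar y1 = Astar y2 -> y1 = y2) /\
  (* g_cc^* = indicator of {0} on l^2 *)
  (conj g_cc vzero = Finite 0 /\
   forall y, is_l2 y -> y <> vzero -> conj g_cc y = p_infty) /\
  (* the only y in l^2 with g_cc^*(-A^* y) < +oo is y = 0 *)
  (forall y, is_l2 y -> Rbar_lt (conj g_cc (vopp (Astar y))) p_infty -> y = vzero) /\
  (* dual value 0, attained at y = 0 *)
  dual_value = Finite 0 /\ dual_obj vzero = Finite 0 /\
  (* primal value pi^2/12, positive duality gap *)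
  primal_value = Finite (PI ^ 2 / 12) /\ 0 < PI ^ 2 / 12 /\
  Rbar_lt dual_value primal_value /\
  (* f_cc, g_cc convex and lsc, and 0 in core(A dom g_cc - dom f_cc) *)
  convex_cc f_cc /\ convex_cc g_cc /\ lsc_cc f_cc /\ lsc_cc g_cc /\
  in_core Adomg_minus_domf vzero.
Proof.
 assert (Hpi : 0 < PI ^ 2 / 12) by (assert (H := PI_RGT_0); assert (0 < PI^2) by (apply pow_lt; lra); lra).
 split. intros y Hy. split. apply Astar_l2; auto. intros x Hx. apply adjoint; auto.
 split. exact Astar_inj.
 split. split. exact conj_g_zero. intros y _ Hy. apply conj_g_nonzero; auto.
 split. exact part4.
 split. exact dual_value_zero.
 split. exact dual_obj_zero.
 split. exact primal_val.
 split. exact Hpi.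
 split. rewrite dual_value_zero, primal_val. simpl. exact Hpi.
 split. exact f_convex.
 split. exact g_convex.
 split. exact f_lsc.
 split. exact g_lsc.
 exact core0.
Qed.
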